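(* Let $U$ be a finite set and let $f:2^U\to\mathbb{R}$ be non-decreasing and $\varepsilon$-approximately submodular for some $\varepsilon\ge 0$. Let $S\subseteq U$ satisfy: (i) $S$ is a Greedy Maximum Differential Set of $f$ (with respect to the ordering $s_1,\dots,s_{|S|}$); (ii) $f(S)=f_{\max}$; (iii) $\delta_{\min}>0$. Then for every set $C\subseteq U$ with $f(C)=f_{\max}$, $$|S|<\Big(1+\frac{\varepsilon}{\delta_{\min}}+\ln\Big(\frac{\delta_{\max}}{\delta_{\min}}\Big)\Big)\cdot|C|+1 .$$
   Context: For $f:2^U\to\mathbb{R}$, $A\subseteq U$ and $x\in U$, write $\Delta_x f(A)=f(A\cup\{x\})-f(A)$, and $f_{\max}=\max_{X\subseteq U} f(X)$. $f$ is non-decreasing if $A\subseteq B$ implies $f(A)\le f(B)$. $f$ is $\varepsilon$-approximately submodular ($\varepsilon\in[0,\infty)$) if for all $A\subseteq B\subseteq U$ and $x\in U\setminus B$, $\Delta_x f(B)\le \Delta_x f(A)+\varepsilon$. A set $S\subseteq U$ is a Greedy Maximum Differential Set of $f$ if its elements can be ordered $s_1,\dots,s_{|S|}$ such that, with $S_0=\emptyset$ and $S_i=\{s_1,\dots,s_i\}$, for every $i$ we have $\Delta_{s_i}f(S_{i-1})\ge \Delta_u f(S_{i-1})$ for all $u\in U$. For such an ordered $S$: $\delta_{\max}=\Delta_{s_1}f(\emptyset)=\max_{x\in U}\Delta_x f(\emptyset)$ and $\delta_{\min}=\min_{1\le i\le |S|}\Delta_{s_i}f(S_{i-1})$. *)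

(* Defs.v *)
From HB Require Import structures.
From mathcomp Require Import all_boot all_order all_algebra.
From mathcomp Require Import reals exp.
Set Implicit Arguments. Unset Strict Implicit. Unset Printing Implicit Defensive.
Import Order.TTheory GRing.Theory Num.Theory.
Local Open Scope ring_scope.

Section Defs.
Variables (R : realType) (U : finType).

Definition Delta (f : {set U} -> R) (x : U) (A : {set U}) : R :=
  f (x |: A) - f A.

Definition nondecreasing_set (f : {set U} -> R) : Prop :=
  forall A B : {set U}, A \subset B -> f A <= f B.

Definition approx_submodular (eps : R) (f : {set U} -> R) : Prop :=
  forall (A B : {set U}) (x : U), A \subset B -> x \notin B ->
    Delta f x B <= Delta f x A + eps.

Definition attains_fmax (f : {set U} -> R) (X : {set U}) : Prop :=
  forall Y : {set U}, f Y <= f X.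

Definition prefix_set (s : seq U) (i : nat) : {set U} := [set x in take i s].

(* s (a duplicate-free ordering of S) witnesses that S is a Greedy Maximum
   Differential Set of f *)
Definition greedy_ordering (f : {set U} -> R) (S : {set U}) (s : seq U) : Prop :=
  [/\ uniq s, S = [set x in s] &
      forall (i : nat) (x0 : U), (i < size s)%N -> forall u : U,
        Delta f u (prefix_set s i) <= Delta f (nth x0 s i) (prefix_set s i)].

(* the gain of the i-th greedy step (0-based): Delta_{s_{i+1}} f(S_i) *)
Definition greedy_gain (f : {set U} -> R) (s : seq U) (x0 : U) (i : nat) : R :=
  Delta f (nth x0 s i) (prefix_set s i).

Definition is_delta_max (f : {set U} -> R) (d : R) : Prop :=
  (exists x : U, d = Delta f x set0) /\ (forall x : U, Delta f x set0 <= d).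

Definition is_delta_min (f : {set U} -> R) (s : seq U) (d : R) : Prop :=
  (exists2 i, (i < size s)%N & forall x0 : U, d = greedy_gain f s x0 i) /\
  (forall (i : nat) (x0 : U), (i < size s)%N -> d <= greedy_gain f s x0 i).

End Defs.

(* Main.v *)
Require Import Defs.
From HB Require Import structures.
From mathcomp Require Import all_boot all_order all_algebra.
From mathcomp Require Import reals exp.
From mathcomp Require Import ring lra.
From mathcomp Require Import sequences.
Import Order.TTheory GRing.Theory Num.Theory.
Local Open Scope ring_scope.
Set Implicit Arguments.

Section Aux.
Variables (R : realType) (U : finType).

Lemma prefix_setS (s : seq U) i x0 : (i < size s)%N ->
  prefix_set s i.+1 = nth x0 s i |: prefix_set s i.
Proof.
move=> hi; rewrite /prefix_set (take_nth x0 hi).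
by apply/setP=> y; rewrite !inE mem_rcons in_cons.
Qed.

Lemma prefix_set0 (s : seq U) : prefix_set s 0 = set0.
Proof. by apply/setP=> y; rewrite !inE take0. Qed.

Lemma chain_bound (f : {set U} -> R) eps (A : {set U}) g :
  approx_submodular eps f -> 0 <= g + eps ->
  (forall u, Delta f u A <= g) ->
  forall l : seq U, f (A :|: [set x in l]) - f A <= (size l)%:R * (g + eps).
Proof.
move=> hsub hge hg; elim=> [|x l IH].
  have -> : A :|: [set x in [::]] = A by apply/setP=> y; rewrite !inE orbF.
  by rewrite subrr mul0r.
have -> : A :|: [set y in x :: l] = x |: (A :|: [set y in l]).
  by apply/setP=> y; rewrite !inE; case: (y == x); rewrite ?orbT.
set B := A :|: [set y in l].
have step : f (x |: B) - f B <= g + eps.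
  case: (boolP (x \in B)) => xB.
    by rewrite (setUidPr _) ?sub1set // subrr.
  have := hsub A B x (subsetUl _ _) xB; rewrite /Delta.
  have := hg x; rewrite /Delta; lra.
rewrite /= -natr1 mulrDl mul1r; lra.
Qed.

End Aux.


Theorem mainTheorem1 (R : realType) (U : finType) (f : {set U} -> R) (eps : R)
  (S : {set U}) (s : seq U) (dmin dmax : R) :
  0 <= eps ->
  nondecreasing_set f ->
  approx_submodular eps f ->
  greedy_ordering f S s ->
  attains_fmax f S ->
  is_delta_min f s dmin ->
  is_delta_max f dmax ->
  0 < dmin ->
  forall C : {set U}, attains_fmax f C ->
    (#|S|%:R : R) < (1 + eps / dmin + ln (dmax / dmin)) * #|C|%:R + 1.
Proof.
move=> eps0 mono sub [us defS greedy] Smax [[i0 hi0 dmin_eq] dmin_le] [_ dmax_ge] dmin0 C Cmax.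
have [x0 _] : exists x0 : U, True.
  by case: s hi0 {us defS greedy dmin_eq dmin_le} => [|x _] //; exists x.
set k := size s.
pose c := (#|C|%:R : R).
pose r i := f C - f (prefix_set s i).
pose g i := greedy_gain f s x0 i.
have hk : prefix_set s k = S by rewrite /prefix_set take_size defS.
have rk : r k = 0.
  by rewrite /r hk; apply/eqP; rewrite subr_eq0 eq_le Smax Cmax.
have hA : forall i, (i < k)%N -> r i.+1 = r i - g i.
  move=> i hi; rewrite /r /g /greedy_gain /Delta (@prefix_setS U s i x0 hi); lra.
have hg : forall i, (i < k)%N -> dmin <= g i by move=> i hi; exact: dmin_le.
have hB : forall j m, (m + j <= k)%N -> j%:R * dmin <= r m - r (m + j)%N.
  elim=> [|j IH] m hmj; first by rewrite mul0r addn0 subrr.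
  move: hmj; rewrite addnS => hmj.
  have h1 := IH m (ltnW hmj).
  rewrite (hA _ hmj) -natr1 mulrDl mul1r.
  have := hg _ hmj; lra.
have hC : forall i, (i < k)%N -> r i <= c * (g i + eps).
  move=> i hi.
  have := chain_bound (prefix_set s i) _ sub _ (fun u => greedy i x0 hi u) (enum C).
  rewrite set_enum -cardE /c mulrC => /(_ _) h.
  have hge : 0 <= Delta f (nth x0 s i) (prefix_set s i) + eps.
    by have := hg i hi; rewrite /g /greedy_gain; lra.
  have := h hge; have := mono C (prefix_set s i :|: C) (subsetUr _ _).
  rewrite /r /g /greedy_gain; lra.
have g0 : g 0 <= dmax.
  by have := dmax_ge (nth x0 s 0); rewrite /g /greedy_gain /Delta prefix_set0.
have k0 : (0 < k)%N by apply: leq_ltn_trans hi0.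
have c0 : 0 < c.
  rewrite /c ltr0n lt0n; apply/negP => /eqP C0.
  have := hC 0%N k0; rewrite /c C0 mul0r.
  have := hB k 0%N (leqnn _); rewrite add0n rk subr0.
  have : 0 < k%:R * dmin by rewrite mulr_gt0 // ltr0n.
  lra.
have c1 : 1 <= c by move: c0; rewrite /c ltr0n ler1n.
have dmax0 : 0 < dmax by have := hg 0%N k0; lra.
have hE : forall i, (i <= k)%N ->
    r i - c * eps <= c * dmax * expR (- (i%:R / c)).
  elim=> [|i IH] hi.
    rewrite mul0r oppr0 expR0 mulr1.
    have := hC 0%N k0; have := g0.
    have : c * g 0 <= c * dmax by rewrite ler_pM2l.
    lra.
  have hi' : (i < k)%N by [].
  have IH' := IH (ltnW hi').
  set X := c * dmax * expR (- (i%:R / c)) in IH'.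
  set y := r i - c * eps in IH'.
  have X0 : 0 <= X.
    by rewrite /X !mulr_ge0 ?expR_ge0 //; lra.
  have gy : y / c <= g i.
    rewrite ler_pdivrMr // /y mulrC; have := hC i hi'; rewrite mulrDr. lra.
  have step1 : r i.+1 - c * eps <= y * (1 - 1 / c).
    rewrite (hA _ hi') mulrBr mulr1 -/y; move: gy; rewrite /y mul1r; lra.
  have e1 : 0 <= 1 - 1 / c.
    rewrite subr_ge0 ler_pdivrMr // mul1r //.
  have step2 : y * (1 - 1 / c) <= X * (1 - 1 / c) by rewrite ler_wpM2r.
  have step3 : X * (1 - 1 / c) <= X * expR (- (1 / c)).
    by rewrite ler_wpM2l // -[1 - 1 / c]/(1 + - (1 / c)) expR_ge1Dx.
  have -> : c * dmax * expR (- (i.+1%:R / c)) = X * expR (- (1 / c)).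
    by rewrite /X -natr1 mulrDl opprD expRD mulrA.
  lra.
have hF : forall i, (i <= k)%N -> c * (dmin + eps) < r i ->
    i%:R < c * ln (dmax / dmin).
  move=> i hi hr.
  have := hE i hi.
  set E := expR (- (i%:R / c)) => h.
  have h1 : c * dmin < c * (dmax * E) by rewrite mulrA; lra.
  rewrite ltr_pM2l // in h1.
  have h2 : dmin * expR (i%:R / c) < dmax.
    move: h1; rewrite /E expRN ltr_pdivlMr ?expR_gt0 //.
  have : ln (dmin * expR (i%:R / c)) < ln dmax.
    rewrite ltr_ln // posrE ?mulr_gt0 ?expR_gt0 //.
  rewrite lnM ?posrE ?expR_gt0 // expRK.
  rewrite lnM ?posrE ?invr_gt0 // lnV ?posrE //.
  move=> h3; rewrite -ltr_pdivrMl //.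
  rewrite mulrC; lra.
pose thr := c * (dmin + eps).
have thr0 : 0 <= thr by rewrite /thr mulr_ge0 //; lra.
have exP : exists m, (m <= k)%N && (r m <= thr) by exists k; rewrite leqnn rk.
case: (ex_minnP exP) => m /andP[mk rm] mmin.
have hkm : (k%:R - m%:R) * dmin <= thr.
  have := hB (k - m)%N m; rewrite subnKC // rk subr0 natrB // => /(_ (leqnn _)).
  lra.
have hkm' : k%:R - m%:R <= c + c * (eps / dmin).
  rewrite -ler_pdivlMr // in hkm.
  have e : c * (dmin + eps) / dmin = c + c * (eps / dmin).
    by field; rewrite gt_eqF.
  by move: hkm; rewrite /thr e.
have L0 : 0 <= ln (dmax / dmin).
  by apply: ln_ge0; rewrite ler_pdivlMr // mul1r; have := hg 0%N k0; lra.
have hm : m%:R < c * ln (dmax / dmin) + 1.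
  case: m mk rm mmin hkm hkm' => [|m] mk rm mmin _ _.
    by have := mulr_ge0 (ltW c0) L0; lra.
  have hm' : ~~ (r m <= thr).
    apply/negP => h; have := mmin m; rewrite (ltnW mk) h => /(_ isT).
    by rewrite ltnn.
  rewrite -ltNge in hm'.
  have := hF m (ltnW mk) hm'; rewrite -natr1; lra.
have -> : #|S| = k by rewrite defS cardsE; apply/card_uniqP.
have -> : (1 + eps / dmin + ln (dmax / dmin)) * #|C|%:R =
   c + c * (eps / dmin) + c * ln (dmax / dmin) by rewrite /c; ring.
lra.
Qed.
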